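(* Let $\Omega\subset\mathbb{R}^2$ be open, $\lambda>0$, and let $u\in L^2(\Omega)$ satisfy $-\Delta u=\lambda u$ in $\Omega$. Let $\mathbf{x}_0\in\Omega$, $h>0$, and let $\mathbf{e}^-,\mathbf{e}^+$ be unit vectors with angle $\alpha\pi$ from $\mathbf{e}^-$ to $\mathbf{e}^+$, where $\alpha\in(0,2)$ is irrational; put $\Gamma^\pm=\{\mathbf{x}_0+t\mathbf{e}^\pm:0\le t\le h\}\subset\Omega$. Suppose $\Gamma^-$ and $\Gamma^+$ are generalized singular lines of $u$ with constant parameters $\eta_1\equiv C_1$ and $\eta_2\equiv C_2$ respectively. Then $\mathrm{Vani}(u;\mathbf{x}_0)=0$ if $u(\mathbf{x}_0)\neq0$, and $\mathrm{Vani}(u;\mathbf{x}_0)=+\infty$ if $u(\mathbf{x}_0)=0$.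
   Context: No boundary condition is imposed on $\partial\Omega$; $u$ is real-analytic in $\Omega$. A generalized singular line with parameter $\eta$ (not identically zero; here a nonzero complex constant) is a segment $\Gamma$ on which $\partial_\nu u+\eta u=0$, $\nu$ a unit normal to $\Gamma$. $\mathrm{Vani}(u;\mathbf{x}_0)$ is the smallest degree of a nonzero homogeneous term in the Taylor expansion of $u$ at $\mathbf{x}_0$ ($+\infty$ if all vanish). *)

(* Defs.v *)
From Stdlib Require Import Reals List Arith Factorial.
From Coquelicot Require Import Coquelicot.
Open Scope R_scope.

Definition Cfun := R -> R -> C.

Definition dx (f : Cfun) : Cfun := fun x y =>
  (Derive (fun t => fst (f t y)) x, Derive (fun t => snd (f t y)) x).
Definition dy (f : Cfun) : Cfun := fun x y =>
  (Derive (fun t => fst (f x t)) y, Derive (fun t => snd (f x t)) y).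

(* Iterated partial derivative along a word: true = d/dx, false = d/dy;
   the head of the list is applied last. *)
Fixpoint Dw (w : list bool) (f : Cfun) : Cfun :=
  match w with
  | nil => f
  | b :: w' => (if b then dx else dy) (Dw w' f)
  end.

Definition open2 (Om : R -> R -> Prop) : Prop :=
  forall x y, Om x y -> exists eps, 0 < eps /\
    forall x' y', (x' - x)^2 + (y' - y)^2 < eps^2 -> Om x' y'.

Definition smooth_on (Om : R -> R -> Prop) (f : Cfun) : Prop :=
  forall w x y, Om x y ->
    continuity_2d_pt (fun a b => fst (Dw w f a b)) x y /\
    continuity_2d_pt (fun a b => snd (Dw w f a b)) x y /\
    ex_derive (fun t => fst (Dw w f t y)) x /\
    ex_derive (fun t => snd (Dw w f t y)) x /\
    ex_derive (fun t => fst (Dw w f x t)) y /\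
    ex_derive (fun t => snd (Dw w f x t)) y.

Definition helmholtz_on (Om : R -> R -> Prop) (lam : R) (u : Cfun) : Prop :=
  forall x y, Om x y ->
    Cplus (dx (dx u) x y) (dy (dy u) x y) = Cmult (RtoC (- lam)) (u x y).

Definition ddir (nu : R * R) (u : Cfun) : Cfun := fun x y =>
  Cplus (Cmult (RtoC (fst nu)) (dx u x y)) (Cmult (RtoC (snd nu)) (dy u x y)).

Definition on_segment (x0 e : R * R) (h : R) (p : R * R) : Prop :=
  exists t, 0 <= t <= h /\ p = (fst x0 + t * fst e, snd x0 + t * snd e).

Definition gen_singular_line (u : Cfun) (x0 e : R * R) (h : R) (eta : C) : Prop :=
  exists nu : R * R,
    fst nu ^ 2 + snd nu ^ 2 = 1 /\ fst nu * fst e + snd nu * snd e = 0 /\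
    forall p, on_segment x0 e h p ->
      Cplus (ddir nu u (fst p) (snd p)) (Cmult eta (u (fst p) (snd p))) = RtoC 0.

Definition taylor_hom (u : Cfun) (x0 : R * R) (n : nat) (z1 z2 : R) : C :=
  sum_n (fun k =>
    Cmult (RtoC (/ (INR (fact k) * INR (fact (n - k))) * z1 ^ k * z2 ^ (n - k)))
          (Dw (repeat true k ++ repeat false (n - k)) u (fst x0) (snd x0))) n.

Definition hom_nonzero (u : Cfun) (x0 : R * R) (n : nat) : Prop :=
  exists z1 z2, taylor_hom u x0 n z1 z2 <> RtoC 0.

(* Vani(u; x0) = v, with v = Some n (a finite degree) or None (+infinity). *)
Definition Vani_is (u : Cfun) (x0 : R * R) (v : option nat) : Prop :=
  match v with
  | Some n => hom_nonzero u x0 n /\ forall m, (m < n)%nat -> ~ hom_nonzero u x0 m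
  | None => forall m, ~ hom_nonzero u x0 m
  end.

Definition irrational (a : R) : Prop :=
  ~ exists p q : Z, q <> 0%Z /\ a = IZR p / IZR q.

(* Main.v *)
Require Import Defs.
From Stdlib Require Import Reals List Lia Lra Psatz Arith Wf_nat.
From Coquelicot Require Import Coquelicot.
Open Scope R_scope.

Lemma Derive_comb (f1 f2 g1 g2 : R -> R) a1 a2 b1 b2 x :
  ex_derive f1 x -> ex_derive f2 x -> ex_derive g1 x -> ex_derive g2 x ->
  Derive (fun t => a1 * f1 t - a2 * f2 t + (b1 * g1 t - b2 * g2 t)) x =
  a1 * Derive f1 x - a2 * Derive f2 x + (b1 * Derive g1 x - b2 * Derive g2 x).
Proof.
  intros. apply is_derive_unique. auto_derive. repeat split; auto. cbv beta. change (fun x0 => f1 x0) with f1; change (fun x0 => f2 x0) with f2; change (fun x0 => g1 x0) with g1; change (fun x0 => g2 x0) with g2. ring.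
Qed.

Lemma Derive_comb' (f1 f2 g1 g2 : R -> R) a1 a2 b1 b2 x :
  ex_derive f1 x -> ex_derive f2 x -> ex_derive g1 x -> ex_derive g2 x ->
  Derive (fun t => a1 * f2 t + a2 * f1 t + (b1 * g2 t + b2 * g1 t)) x =
  a1 * Derive f2 x + a2 * Derive f1 x + (b1 * Derive g2 x + b2 * Derive g1 x).
Proof.
  intros. apply is_derive_unique. auto_derive. repeat split; auto. cbv beta. change (fun x0 => f1 x0) with f1; change (fun x0 => f2 x0) with f2; change (fun x0 => g1 x0) with g1; change (fun x0 => g2 x0) with g2. ring.
Qed.

Lemma ex_derive_comb (f1 f2 g1 g2 : R -> R) a1 a2 b1 b2 x :
  ex_derive f1 x -> ex_derive f2 x -> ex_derive g1 x -> ex_derive g2 x ->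
  ex_derive (fun t => a1 * f1 t - a2 * f2 t + (b1 * g1 t - b2 * g2 t)) x /\
  ex_derive (fun t => a1 * f2 t + a2 * f1 t + (b1 * g2 t + b2 * g1 t)) x.
Proof.
  intros. split; auto_derive; repeat split; auto.
Qed.

Lemma open2_loc Om x y : open2 Om -> Om x y -> locally_2d Om x y.
Proof.
  intros HO H. destruct (HO x y H) as [eps [He Hb]].
  assert (Hd: 0 < eps/2) by lra.
  exists (mkposreal _ Hd). simpl. intros u v Hu Hv. apply Hb.
  apply Rabs_def2 in Hu; apply Rabs_def2 in Hv. nra.
Qed.

Lemma ex_derive_comb1 (f1 f2 g1 g2 : R -> R) a1 a2 b1 b2 x :
  ex_derive f1 x -> ex_derive f2 x -> ex_derive g1 x -> ex_derive g2 x ->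
  ex_derive (fun t => a1 * f1 t - a2 * f2 t + (b1 * g1 t - b2 * g2 t)) x.
Proof. intros; auto_derive; repeat split; assumption. Qed.
Lemma ex_derive_comb2 (f1 f2 g1 g2 : R -> R) a1 a2 b1 b2 x :
  ex_derive f1 x -> ex_derive f2 x -> ex_derive g1 x -> ex_derive g2 x ->
  ex_derive (fun t => a1 * f2 t + a2 * f1 t + (b1 * g2 t + b2 * g1 t)) x.
Proof. intros; auto_derive; repeat split; assumption. Qed.
Definition lin (a : C) (F : Cfun) (b : C) (G : Cfun) : Cfun :=
  fun x y => Cplus (Cmult a (F x y)) (Cmult b (G x y)).

Lemma Dw_app w1 w2 F : Dw (w1 ++ w2) F = Dw w1 (Dw w2 F).
Proof. induction w1 as [|b w1 IH]; simpl; [reflexivity| rewrite IH; reflexivity]. Qed.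

Lemma smooth_dx Om F : smooth_on Om F -> smooth_on Om (dx F).
Proof.
  intros H w x y Hxy. change (dx F) with (Dw (true :: nil) F).
  rewrite <- Dw_app. apply H; auto.
Qed.

Lemma smooth_dy Om F : smooth_on Om F -> smooth_on Om (dy F).
Proof.
  intros H w x y Hxy. change (dy F) with (Dw (false :: nil) F).
  rewrite <- Dw_app. apply H; auto.
Qed.

Lemma loc_y Om (P : R -> R -> Prop) x y : open2 Om -> Om x y ->
  (forall u v, Om u v -> P u v) -> locally x (fun t => P t y).
Proof.
  intros HO H HP. apply locally_2d_1d_const_y with (P := P).
  destruct (open2_loc Om x y HO H) as [d Hd]. exists d. intros; apply HP, Hd; auto.
Qed.

Lemma loc_x Om (P : R -> R -> Prop) x y : open2 Om -> Om x y ->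
  (forall u v, Om u v -> P u v) -> locally y (fun t => P x t).
Proof.
  intros HO H HP. apply locally_2d_1d_const_x with (P := P).
  destruct (open2_loc Om x y HO H) as [d Hd]. exists d. intros; apply HP, Hd; auto.
Qed.

Lemma loc_2d Om (P : R -> R -> Prop) x y : open2 Om -> Om x y ->
  (forall u v, Om u v -> P u v) -> locally_2d P x y.
Proof.
  intros HO H HP.
  destruct (open2_loc Om x y HO H) as [d Hd]. exists d. intros; apply HP, Hd; auto.
Qed.

Lemma Dw_lin Om a b F G : open2 Om -> smooth_on Om F -> smooth_on Om G ->
  forall w x y, Om x y -> Dw w (lin a F b G) x y = lin a (Dw w F) b (Dw w G) x y.
Proof.
  intros HO HF HG w. induction w as [|b0 w IH]; intros x y Hxy; [reflexivity|].
  destruct (HF w x y Hxy) as (_&_&Fx1&Fx2&Fy1&Fy2).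
  destruct (HG w x y Hxy) as (_&_&Gx1&Gx2&Gy1&Gy2).
  destruct b0; cbn [Dw]; unfold dx, dy.
  - rewrite (Derive_ext_loc (fun t => fst (Dw w (lin a F b G) t y))
        (fun t => fst (lin a (Dw w F) b (Dw w G) t y)));
      [| apply (loc_y Om (fun u v => fst (Dw w (lin a F b G) u v) = fst (lin a (Dw w F) b (Dw w G) u v))); auto;
         intros; rewrite IH; auto].
    rewrite (Derive_ext_loc (fun t => snd (Dw w (lin a F b G) t y))
        (fun t => snd (lin a (Dw w F) b (Dw w G) t y)));
      [| apply (loc_y Om (fun u v => snd (Dw w (lin a F b G) u v) = snd (lin a (Dw w F) b (Dw w G) u v))); auto;
         intros; rewrite IH; auto].
    destruct a as [a1 a2]; destruct b as [b1 b2]. unfold lin, Cplus, Cmult; simpl.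
    f_equal.
    + apply (Derive_comb (fun t => fst (Dw w F t y)) (fun t => snd (Dw w F t y))
                         (fun t => fst (Dw w G t y)) (fun t => snd (Dw w G t y))); auto.
    + apply (Derive_comb' (fun t => fst (Dw w F t y)) (fun t => snd (Dw w F t y))
                         (fun t => fst (Dw w G t y)) (fun t => snd (Dw w G t y))); auto.
  - rewrite (Derive_ext_loc (fun t => fst (Dw w (lin a F b G) x t))
        (fun t => fst (lin a (Dw w F) b (Dw w G) x t)));
      [| apply (loc_x Om (fun u v => fst (Dw w (lin a F b G) u v) = fst (lin a (Dw w F) b (Dw w G) u v))); auto;
         intros; rewrite IH; auto].
    rewrite (Derive_ext_loc (fun t => snd (Dw w (lin a F b G) x t))
        (fun t => snd (lin a (Dw w F) b (Dw w G) x t)));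
      [| apply (loc_x Om (fun u v => snd (Dw w (lin a F b G) u v) = snd (lin a (Dw w F) b (Dw w G) u v))); auto;
         intros; rewrite IH; auto].
    destruct a as [a1 a2]; destruct b as [b1 b2]. unfold lin, Cplus, Cmult; simpl.
    f_equal.
    + apply (Derive_comb (fun t => fst (Dw w F x t)) (fun t => snd (Dw w F x t))
                         (fun t => fst (Dw w G x t)) (fun t => snd (Dw w G x t))); auto.
    + apply (Derive_comb' (fun t => fst (Dw w F x t)) (fun t => snd (Dw w F x t))
                         (fun t => fst (Dw w G x t)) (fun t => snd (Dw w G x t))); auto.
Qed.
Lemma smooth_lin Om a b F G : open2 Om -> smooth_on Om F -> smooth_on Om G ->
  smooth_on Om (lin a F b G).
Proof.
  intros HO HF HG w x y Hxy.
  destruct (HF w x y Hxy) as (Fc1&Fc2&Fx1&Fx2&Fy1&Fy2).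
  destruct (HG w x y Hxy) as (Gc1&Gc2&Gx1&Gx2&Gy1&Gy2).
  assert (E : forall u v, Om u v -> lin a (Dw w F) b (Dw w G) u v = Dw w (lin a F b G) u v)
    by (intros; symmetry; apply (Dw_lin Om); auto).
  destruct a as [a1 a2]; destruct b as [b1 b2].
  split; [|split; [|split; [|split; [|split]]]].
  - apply continuity_2d_pt_ext_loc with (f := fun u v => fst (lin (a1,a2) (Dw w F) (b1,b2) (Dw w G) u v)).
    + apply (loc_2d Om); auto. intros u v H; rewrite E; auto.
    + unfold lin, Cplus, Cmult; simpl.
      apply continuity_2d_pt_plus; apply continuity_2d_pt_minus;
      apply continuity_2d_pt_mult; try assumption; apply continuity_2d_pt_const.
  - apply continuity_2d_pt_ext_loc with (f := fun u v => snd (lin (a1,a2) (Dw w F) (b1,b2) (Dw w G) u v)).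
    + apply (loc_2d Om); auto. intros u v H; rewrite E; auto.
    + unfold lin, Cplus, Cmult; simpl.
      apply continuity_2d_pt_plus; apply continuity_2d_pt_plus;
      apply continuity_2d_pt_mult; try assumption; apply continuity_2d_pt_const.
  - apply ex_derive_ext_loc with (f := fun t => fst (lin (a1,a2) (Dw w F) (b1,b2) (Dw w G) t y)).
    + apply (loc_y Om (fun u v => fst (lin (a1,a2) (Dw w F) (b1,b2) (Dw w G) u v) = fst (Dw w (lin (a1,a2) F (b1,b2) G) u v))); auto.
      intros u v H; rewrite E; auto.
    + unfold lin, Cplus, Cmult; simpl.
      apply (ex_derive_comb1 (fun t => fst (Dw w F t y)) (fun t => snd (Dw w F t y))
                         (fun t => fst (Dw w G t y)) (fun t => snd (Dw w G t y))); assumption.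
  - apply ex_derive_ext_loc with (f := fun t => snd (lin (a1,a2) (Dw w F) (b1,b2) (Dw w G) t y)).
    + apply (loc_y Om (fun u v => snd (lin (a1,a2) (Dw w F) (b1,b2) (Dw w G) u v) = snd (Dw w (lin (a1,a2) F (b1,b2) G) u v))); auto.
      intros u v H; rewrite E; auto.
    + unfold lin, Cplus, Cmult; simpl.
      apply (ex_derive_comb2 (fun t => fst (Dw w F t y)) (fun t => snd (Dw w F t y))
                         (fun t => fst (Dw w G t y)) (fun t => snd (Dw w G t y))); assumption.
  - apply ex_derive_ext_loc with (f := fun t => fst (lin (a1,a2) (Dw w F) (b1,b2) (Dw w G) x t)).
    + apply (loc_x Om (fun u v => fst (lin (a1,a2) (Dw w F) (b1,b2) (Dw w G) u v) = fst (Dw w (lin (a1,a2) F (b1,b2) G) u v))); auto.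
      intros u v H; rewrite E; auto.
    + unfold lin, Cplus, Cmult; simpl.
      apply (ex_derive_comb1 (fun t => fst (Dw w F x t)) (fun t => snd (Dw w F x t))
                         (fun t => fst (Dw w G x t)) (fun t => snd (Dw w G x t))); assumption.
  - apply ex_derive_ext_loc with (f := fun t => snd (lin (a1,a2) (Dw w F) (b1,b2) (Dw w G) x t)).
    + apply (loc_x Om (fun u v => snd (lin (a1,a2) (Dw w F) (b1,b2) (Dw w G) u v) = snd (Dw w (lin (a1,a2) F (b1,b2) G) u v))); auto.
      intros u v H; rewrite E; auto.
    + unfold lin, Cplus, Cmult; simpl.
      apply (ex_derive_comb2 (fun t => fst (Dw w F x t)) (fun t => snd (Dw w F x t))
                         (fun t => fst (Dw w G x t)) (fun t => snd (Dw w G x t))); assumption.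
Qed.
Lemma Dw_loc Om F G : open2 Om -> (forall x y, Om x y -> F x y = G x y) ->
  forall w x y, Om x y -> Dw w F x y = Dw w G x y.
Proof.
  intros HO HFG w. induction w as [|b0 w IH]; intros x y Hxy; [apply HFG; auto|].
  destruct b0; cbn [Dw]; unfold dx, dy; f_equal; apply Derive_ext_loc.
  - apply (loc_y Om (fun u v => fst (Dw w F u v) = fst (Dw w G u v))); auto; intros; rewrite IH; auto.
  - apply (loc_y Om (fun u v => snd (Dw w F u v) = snd (Dw w G u v))); auto; intros; rewrite IH; auto.
  - apply (loc_x Om (fun u v => fst (Dw w F u v) = fst (Dw w G u v))); auto; intros; rewrite IH; auto.
  - apply (loc_x Om (fun u v => snd (Dw w F u v) = snd (Dw w G u v))); auto; intros; rewrite IH; auto.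
Qed.

Definition good (Om : R -> R -> Prop) (T : Cfun -> Cfun) : Prop :=
  (forall F, smooth_on Om F -> smooth_on Om (T F)) /\
  (forall F G, (forall x y, Om x y -> F x y = G x y) -> forall x y, Om x y -> T F x y = T G x y) /\
  (forall a b F G, smooth_on Om F -> smooth_on Om G ->
     forall x y, Om x y -> T (lin a F b G) x y = lin a (T F) b (T G) x y).

Lemma good_dx Om : open2 Om -> good Om dx.
Proof.
  intros HO; split; [|split].
  - apply smooth_dx.
  - intros F G H x y Hxy. apply (Dw_loc Om F G HO H (true :: nil)); auto.
  - intros a b F G HF HG x y Hxy. apply (Dw_lin Om a b F G HO HF HG (true :: nil)); auto.
Qed.

Lemma good_dy Om : open2 Om -> good Om dy.
Proof.
  intros HO; split; [|split].
  - apply smooth_dy.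
  - intros F G H x y Hxy. apply (Dw_loc Om F G HO H (false :: nil)); auto.
  - intros a b F G HF HG x y Hxy. apply (Dw_lin Om a b F G HO HF HG (false :: nil)); auto.
Qed.

Lemma good_comb Om (T1 T2 : Cfun -> Cfun) (c d : C) : open2 Om -> good Om T1 -> good Om T2 ->
  good Om (fun F => lin c (T1 F) d (T2 F)).
Proof.
  intros HO [S1 [L1 N1]] [S2 [L2 N2]]; split; [|split].
  - intros F HF. apply smooth_lin; auto.
  - intros F G H x y Hxy. unfold lin. rewrite (L1 F G H), (L2 F G H); auto.
  - intros a b F G HF HG x y Hxy. unfold lin at 1 2 3.
    rewrite (N1 a b F G), (N2 a b F G); auto. unfold lin. ring.
Qed.

Lemma good_comp Om T1 T2 : good Om T1 -> good Om T2 -> good Om (fun F => T1 (T2 F)).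
Proof.
  intros [S1 [L1 N1]] [S2 [L2 N2]]; split; [|split].
  - intros F HF. apply S1, S2, HF.
  - intros F G H x y Hxy. apply L1; auto. 
  - intros a b F G HF HG x y Hxy.
    rewrite (L1 _ (lin a (T2 F) b (T2 G))); auto.
Qed.

Lemma good_id Om : good Om (fun F => F).
Proof. split; [|split]; auto. Qed.

Fixpoint pw (n : nat) (T : Cfun -> Cfun) (F : Cfun) : Cfun :=
  match n with O => F | S n' => pw n' T (T F) end.

Lemma good_pw Om T n : good Om T -> good Om (pw n T).
Proof.
  intros HT. induction n as [|n IH]; simpl.
  - apply good_id.
  - change (good Om (fun F => pw n T (T F))). apply good_comp; auto.
Qed.

Lemma pw_S' n T F : pw (S n) T F = T (pw n T F).
Proof. revert F; induction n; intros F; simpl; auto. rewrite <- IHn. reflexivity. Qed.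
Open Scope C_scope.
Definition Ci : C := (0%R, 1%R).
Definition Wop (F : Cfun) : Cfun := lin 1 (dy F) Ci (dx F).
Definition Wbop (F : Cfun) : Cfun := lin 1 (dy F) (- Ci) (dx F).
Close Scope C_scope.

Lemma good_W Om : open2 Om -> good Om Wop.
Proof. intros HO. apply good_comb; auto using good_dx, good_dy. Qed.
Lemma good_Wb Om : open2 Om -> good Om Wbop.
Proof. intros HO. apply good_comb; auto using good_dx, good_dy. Qed.

Lemma schwarz_C Om F : open2 Om -> smooth_on Om F -> forall x y, Om x y ->
  dx (dy F) x y = dy (dx F) x y.
Proof.
  intros HO HF x y Hxy. unfold dx, dy; simpl.
  f_equal.
  - apply (Schwarz (fun a b => fst (F a b))).
    + apply (loc_2d Om); auto. intros u v Huv.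
      destruct (HF nil u v Huv) as (_&_&H1&_&H3&_).
      destruct (HF (false :: nil) u v Huv) as (_&_&H5&_).
      destruct (HF (true :: nil) u v Huv) as (_&_&_&_&H7&_).
      repeat split; [exact H1|exact H3|exact H5|exact H7].
    + exact (proj1 (HF (true :: false :: nil) x y Hxy)).
    + exact (proj1 (HF (false :: true :: nil) x y Hxy)).
  - apply (Schwarz (fun a b => snd (F a b))).
    + apply (loc_2d Om); auto. intros u v Huv.
      destruct (HF nil u v Huv) as (_&_&_&H1&_&H3).
      destruct (HF (false :: nil) u v Huv) as (_&_&_&H5&_).
      destruct (HF (true :: nil) u v Huv) as (_&_&_&_&_&H7).
      repeat split; [exact H1|exact H3|exact H5|exact H7].
    + exact (proj1 (proj2 (HF (true :: false :: nil) x y Hxy))).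
    + exact (proj1 (proj2 (HF (false :: true :: nil) x y Hxy))).
Qed.

Lemma W_Wb_comm Om F : open2 Om -> smooth_on Om F -> forall x y, Om x y ->
  Wop (Wbop F) x y = Wbop (Wop F) x y.
Proof.
  intros HO HF x y Hxy.
  destruct (good_dx Om HO) as [_ [_ Nx]]. destruct (good_dy Om HO) as [_ [_ Ny]].
  assert (Sx := smooth_dx Om F HF). assert (Sy := smooth_dy Om F HF).
  assert (E1: dy (Wbop F) x y = lin 1 (dy (dy F)) (-Ci) (dy (dx F)) x y) by (apply Ny; auto).
  assert (E2: dx (Wbop F) x y = lin 1 (dx (dy F)) (-Ci) (dx (dx F)) x y) by (apply Nx; auto).
  assert (E3: dy (Wop F) x y = lin 1 (dy (dy F)) Ci (dy (dx F)) x y) by (apply Ny; auto).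
  assert (E4: dx (Wop F) x y = lin 1 (dx (dy F)) Ci (dx (dx F)) x y) by (apply Nx; auto).
  transitivity (Cplus (Cmult 1 (dy (Wbop F) x y)) (Cmult Ci (dx (Wbop F) x y))); [reflexivity|].
  transitivity (Cplus (Cmult 1 (dy (Wop F) x y)) (Cmult (-Ci) (dx (Wop F) x y))); [|reflexivity].
  rewrite E1, E2, E3, E4. unfold lin.
  rewrite (schwarz_C Om F HO HF x y Hxy). ring.
Qed.
Definition kap (F : Cfun) (x0 : R * R) (p q : nat) : C :=
  pw p Wop (pw q Wbop F) (fst x0) (snd x0).

Lemma comm_pw Om : open2 Om -> forall q F, smooth_on Om F -> forall x y, Om x y ->
  pw q Wbop (Wop F) x y = Wop (pw q Wbop F) x y.
Proof.
  intros HO q. induction q as [|q IH]; intros F HF x y Hxy; [reflexivity|].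
  simpl. rewrite <- IH; auto.
  - destruct (good_pw Om Wbop q (good_Wb Om HO)) as [_ [L _]].
    apply L; auto. intros; symmetry; apply (W_Wb_comm Om); auto.
  - apply (proj1 (good_Wb Om HO)); auto.
Qed.

Section Kap.
Variable Om : R -> R -> Prop.
Variable x0 : R * R.
Hypothesis HO : open2 Om.
Hypothesis Hx0 : Om (fst x0) (snd x0).

Lemma kap_W F p q : smooth_on Om F -> kap (Wop F) x0 p q = kap F x0 (S p) q.
Proof.
  intros HF. unfold kap. simpl.
  destruct (good_pw Om Wop p (good_W Om HO)) as [_ [L _]].
  apply L; auto. intros; apply (comm_pw Om); auto.
Qed.

Lemma kap_Wb F p q : kap (Wbop F) x0 p q = kap F x0 p (S q).
Proof. reflexivity. Qed.

Lemma kap_lin a b F G p q : smooth_on Om F -> smooth_on Om G ->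
  kap (lin a F b G) x0 p q = Cplus (Cmult a (kap F x0 p q)) (Cmult b (kap G x0 p q)).
Proof.
  intros HF HG. unfold kap.
  destruct (good_comp Om (pw p Wop) (pw q Wbop) (good_pw Om Wop p (good_W Om HO))
     (good_pw Om Wbop q (good_Wb Om HO))) as [_ [_ N]].
  apply N; auto.
Qed.

Lemma kap_loc F G p q : (forall x y, Om x y -> F x y = G x y) -> kap F x0 p q = kap G x0 p q.
Proof.
  intros H. unfold kap.
  destruct (good_comp Om (pw p Wop) (pw q Wbop) (good_pw Om Wop p (good_W Om HO))
     (good_pw Om Wbop q (good_Wb Om HO))) as [_ [L _]].
  apply L; auto.
Qed.

Lemma kap_op (T : Cfun -> Cfun) al be F p q : smooth_on Om F ->
  (forall x y, Om x y -> T F x y = lin al (Wop F) be (Wbop F) x y) ->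
  kap (T F) x0 p q = Cplus (Cmult al (kap F x0 (S p) q)) (Cmult be (kap F x0 p (S q))).
Proof.
  intros HF HT. rewrite (kap_loc _ _ p q HT).
  rewrite kap_lin; try apply (proj1 (good_W Om HO)); try apply (proj1 (good_Wb Om HO)); auto.
  rewrite kap_W, kap_Wb; auto.
Qed.

End Kap.

Lemma ddir_W v F x y :
  ddir v F x y = lin (snd v / 2, - fst v / 2)%R (Wop F) (snd v / 2, fst v / 2)%R (Wbop F) x y.
Proof.
  unfold ddir, Wop, Wbop, lin. destruct (dx F x y) as [a1 a2]. destruct (dy F x y) as [b1 b2].
  destruct v as [v1 v2]. unfold Ci, Cplus, Cmult, Copp, RtoC; simpl. f_equal; field.
Qed.
Lemma diff_pt Om (f : R -> R -> R) x y : open2 Om -> Om x y ->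
  (forall u v, Om u v -> ex_derive (fun z => f z v) u) ->
  ex_derive (fun z => f x z) y ->
  continuity_2d_pt (fun u v => Derive (fun z => f z v) u) x y ->
  differentiable_pt_lim f x y (Derive (fun z => f z y) x) (Derive (fun z => f x z) y).
Proof.
  intros HO Hxy Hx Hy Hc.
  apply filterdiff_differentiable_pt_lim.
  eapply filterdiff_ext_lin.
  - apply (is_derive_filterdiff f x y (fun u v => Derive (fun z => f z v) u)).
    + apply (locally_2d_locally (fun u v => is_derive (fun z => f z v) u (Derive (fun z => f z v) u))).
      apply (loc_2d Om); auto. intros u v Huv. apply Derive_correct. auto.
    + apply Derive_correct; auto.
    + apply (continuity_2d_pt_filterlim (fun u v => Derive (fun z => f z v) u)). exact Hc.
  - intros [a b]. simpl. reflexivity.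
Qed.

Lemma line_deriv Om (f : R -> R -> R) (x0 e : R * R) t : open2 Om ->
  Om (fst x0 + t * fst e) (snd x0 + t * snd e) ->
  (forall u v, Om u v -> ex_derive (fun z => f z v) u) ->
  (forall u v, Om u v -> ex_derive (fun z => f u z) v) ->
  (forall u v, Om u v -> continuity_2d_pt (fun u v => Derive (fun z => f z v) u) u v) ->
  is_derive (fun s => f (fst x0 + s * fst e) (snd x0 + s * snd e)) t
    (fst e * Derive (fun z => f z (snd x0 + t * snd e)) (fst x0 + t * fst e)
     + snd e * Derive (fun z => f (fst x0 + t * fst e) z) (snd x0 + t * snd e)).
Proof.
  intros HO Ht Hx Hy Hc.
  apply is_derive_Reals.
  replace (fst e * Derive (fun z => f z (snd x0 + t * snd e)) (fst x0 + t * fst e)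
     + snd e * Derive (fun z => f (fst x0 + t * fst e) z) (snd x0 + t * snd e))
   with (Derive (fun z => f z (snd x0 + t * snd e)) (fst x0 + t * fst e) * fst e
     + Derive (fun z => f (fst x0 + t * fst e) z) (snd x0 + t * snd e) * snd e) by ring.
  apply (derivable_pt_lim_comp_2d f (fun s => fst x0 + s * fst e) (fun s => snd x0 + s * snd e)).
  - apply (diff_pt Om); auto.
  - apply is_derive_Reals. auto_derive; auto. ring.
  - apply is_derive_Reals. auto_derive; auto. ring.
Qed.

Lemma cont_zero (f : R -> R) h : 0 < h -> continuity_pt f 0 ->
  (forall t, 0 < t < h -> f t = 0) -> f 0 = 0.
Proof.
  intros Hh Hc Hz. destruct (Req_dec (f 0) 0) as [E|E]; auto. exfalso.
  assert (Hp : 0 < Rabs (f 0)) by (apply Rabs_pos_lt; auto).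
  destruct (Hc (Rabs (f 0)) Hp) as [d [Hd Hd2]].
  set (t := Rmin d h / 2).
  assert (Ht1 : 0 < t) by (unfold t; apply Rmin_case; lra).
  assert (Ht2 : t < h) by (unfold t; pose proof (Rmin_r d h); lra).
  assert (Ht3 : t < d) by (unfold t; pose proof (Rmin_l d h); lra).
  specialize (Hd2 t). simpl in Hd2. unfold R_dist in Hd2.
  rewrite Hz in Hd2 by lra.
  assert (HH: Rabs (0 - f 0) < Rabs (f 0)).
  { apply Hd2. split. { unfold D_x, no_cond. split; auto; lra. } rewrite Rminus_0_r, Rabs_right; lra. }
  rewrite Rminus_0_l, Rabs_Ropp in HH. lra.
Qed.
Lemma good_ddir Om e : open2 Om -> good Om (ddir e).
Proof.
  intros HO. exact (good_comb Om dx dy (RtoC (fst e)) (RtoC (snd e)) HO (good_dx Om HO) (good_dy Om HO)).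
Qed.

Lemma is_derive_val (f : R -> R) x l l' : is_derive f x l -> l = l' -> is_derive f x l'.
Proof. intros H E; subst; auto. Qed.

Lemma line_C Om F (x0 e : R * R) t : open2 Om -> smooth_on Om F ->
  Om (fst x0 + t * fst e) (snd x0 + t * snd e) ->
  is_derive (fun s => fst (F (fst x0 + s * fst e) (snd x0 + s * snd e))) t
     (fst (ddir e F (fst x0 + t * fst e) (snd x0 + t * snd e))) /\
  is_derive (fun s => snd (F (fst x0 + s * fst e) (snd x0 + s * snd e))) t
     (snd (ddir e F (fst x0 + t * fst e) (snd x0 + t * snd e))).
Proof.
  intros HO HF Ht. split.
  - eapply is_derive_val.
    + apply (line_deriv Om (fun a b => fst (F a b))); auto.
      * intros u v H; apply (HF nil u v H).
      * intros u v H; apply (HF nil u v H).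
      * intros u v H; apply (HF (true :: nil) u v H).
    + unfold ddir, dx, dy, RtoC, Cplus, Cmult; simpl. ring.
  - eapply is_derive_val.
    + apply (line_deriv Om (fun a b => snd (F a b))); auto.
      * intros u v H; apply (HF nil u v H).
      * intros u v H; apply (HF nil u v H).
      * intros u v H; apply (HF (true :: nil) u v H).
    + unfold ddir, dx, dy, RtoC, Cplus, Cmult; simpl. ring.
Qed.

Lemma line_zero Om G (x0 e : R * R) h : open2 Om -> smooth_on Om G -> 0 < h ->
  (forall t, 0 <= t <= h -> Om (fst x0 + t * fst e) (snd x0 + t * snd e)) ->
  (forall t, 0 <= t <= h -> G (fst x0 + t * fst e) (snd x0 + t * snd e) = RtoC 0) ->
  forall j, pw j (ddir e) G (fst x0) (snd x0) = RtoC 0.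
Proof.
  intros HO HG Hh HOm Hz.
  assert (Sj : forall j, smooth_on Om (pw j (ddir e) G))
    by (intros j; apply (proj1 (good_pw Om (ddir e) j (good_ddir Om e HO))); auto).
  assert (A : forall j t, 0 < t < h ->
     pw j (ddir e) G (fst x0 + t * fst e) (snd x0 + t * snd e) = RtoC 0).
  { intros j. induction j as [|j IH]; intros t Ht.
    - apply Hz; lra.
    - rewrite pw_S'.
      destruct (line_C Om (pw j (ddir e) G) x0 e t HO (Sj j) (HOm t ltac:(lra))) as [D1 D2].
      apply is_derive_unique in D1. apply is_derive_unique in D2.
      apply injective_projections; [rewrite <- D1 | rewrite <- D2]; change (fst (RtoC 0)) with 0; change (snd (RtoC 0)) with 0.
      + rewrite (Derive_ext_loc _ (fun _ => 0)). apply Derive_const.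
        apply (locally_interval _ t 0 h); simpl; try lra.
        intros s H1 H2. rewrite IH; [reflexivity|]; simpl in *; lra.
      + rewrite (Derive_ext_loc _ (fun _ => 0)). apply Derive_const.
        apply (locally_interval _ t 0 h); simpl; try lra.
        intros s H1 H2. rewrite IH; [reflexivity|]; simpl in *; lra. }
  intros j.
  destruct (line_C Om (pw j (ddir e) G) x0 e 0 HO (Sj j) (HOm 0 ltac:(lra))) as [D1 D2].
  assert (E1 : fst x0 + 0 * fst e = fst x0) by ring.
  assert (E2 : snd x0 + 0 * snd e = snd x0) by ring.
  apply injective_projections; simpl.
  - assert (C1 := cont_zero (fun s => fst (pw j (ddir e) G (fst x0 + s * fst e) (snd x0 + s * snd e))) h Hh).
    simpl in C1. rewrite E1, E2 in C1. apply C1.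
    + apply continuity_pt_filterlim. exact (ex_derive_continuous _ 0 (ex_intro _ _ D1)).
    + intros t Ht; rewrite A; auto.
  - assert (C1 := cont_zero (fun s => snd (pw j (ddir e) G (fst x0 + s * fst e) (snd x0 + s * snd e))) h Hh).
    simpl in C1. rewrite E1, E2 in C1. apply C1.
    + apply continuity_pt_filterlim. exact (ex_derive_continuous _ 0 (ex_intro _ _ D2)).
    + intros t Ht; rewrite A; auto.
Qed.
Definition Ex (a : R) : C := (cos a, sin a).

Lemma Ex_mult a b : Cmult (Ex a) (Ex b) = Ex (a + b).
Proof.
  unfold Ex, Cmult; simpl. rewrite cos_plus, sin_plus. f_equal; ring.
Qed.

Lemma Epow a n : Cpow (Ex a) n = Ex (INR n * a).
Proof.
  induction n as [|n IH].
  - simpl. unfold Ex. rewrite Rmult_0_l, cos_0, sin_0. reflexivity.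
  - rewrite Cpow_S, IH, Ex_mult. f_equal. rewrite S_INR. ring.
Qed.

Lemma Ex_inv a : Cmult (Ex a) (Ex (- a)) = RtoC 1.
Proof.
  rewrite Ex_mult. replace (a + - a) with 0 by ring. unfold Ex. rewrite cos_0, sin_0. reflexivity.
Qed.

Lemma C_neq_0_pair (a b : R) : b <> 0 -> (a, b) <> RtoC 0.
Proof. intros H E. injection E; intros; auto. Qed.

Lemma Cmult_reg (c z : C) : c <> RtoC 0 -> Cmult c z = RtoC 0 -> z = RtoC 0.
Proof.
  intros Hc H. replace z with (Cmult (Cinv c) (Cmult c z)) by (field; auto).
  rewrite H. ring.
Qed.

Lemma two_lines (th al : R) (M : nat) (X Y : C) : irrational al ->
  Cplus (Cmult (Ex (INR (S M) * th)) X) (Cmult (Ex (- (INR (S M) * th))) Y) = RtoC 0 ->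
  Cplus (Cmult (Ex (INR (S M) * (th + al * PI))) X) (Cmult (Ex (- (INR (S M) * (th + al * PI)))) Y) = RtoC 0 ->
  X = RtoC 0 /\ Y = RtoC 0.
Proof.
  intros Hirr H1 H2.
  set (a := INR (S M) * th) in *. set (b := INR (S M) * (th + al * PI)) in *.
  assert (X1 : X = Cmult (Copp (Cmult (Ex (-a)) (Ex (-a)))) Y).
  { apply (f_equal (Cmult (Ex (-a)))) in H1.
    replace (Cmult (Ex (- a)) (Cplus (Cmult (Ex a) X) (Cmult (Ex (- a)) Y)))
      with (Cplus (Cmult (Cmult (Ex a) (Ex (-a))) X) (Cmult (Cmult (Ex (-a)) (Ex (-a))) Y)) in H1 by ring.
    rewrite Ex_inv in H1. 
    replace X with (Cplus (Cplus (Cmult 1 X) (Cmult (Cmult (Ex (- a)) (Ex (- a))) Y))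
                          (Cmult (Copp (Cmult (Ex (-a)) (Ex (-a)))) Y)) by ring.
    rewrite H1. ring. }
  assert (X2 : X = Cmult (Copp (Cmult (Ex (-b)) (Ex (-b)))) Y).
  { apply (f_equal (Cmult (Ex (-b)))) in H2.
    replace (Cmult (Ex (- b)) (Cplus (Cmult (Ex b) X) (Cmult (Ex (- b)) Y)))
      with (Cplus (Cmult (Cmult (Ex b) (Ex (-b))) X) (Cmult (Cmult (Ex (-b)) (Ex (-b))) Y)) in H2 by ring.
    rewrite Ex_inv in H2.
    replace X with (Cplus (Cplus (Cmult 1 X) (Cmult (Cmult (Ex (- b)) (Ex (- b))) Y))
                          (Cmult (Copp (Cmult (Ex (-b)) (Ex (-b)))) Y)) by ring.
    rewrite H2. ring. }
  rewrite !Ex_mult in X1, X2.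
  assert (HY : Y = RtoC 0).
  { destruct (Ceq_dec Y (RtoC 0)) as [E|E]; auto. exfalso.
    assert (HE : Ex (-a + -a) = Ex (-b + -b)).
    { assert (Cmult (Cplus (Copp (Ex (-a + -a))) (Ex (-b + -b))) Y = RtoC 0).
      { rewrite X1 in X2. transitivity (Cplus (Cmult (Copp (Ex (- a + - a))) Y) (Copp (Cmult (Copp (Ex (- b + - b))) Y))); [ring|].
        rewrite <- X2. ring. }
      assert (Cplus (Copp (Ex (-a + -a))) (Ex (-b + -b)) = RtoC 0).
      { replace (Cplus (Copp (Ex (-a + -a))) (Ex (-b + -b))) with
          (Cmult (Cmult (Cplus (Copp (Ex (-a + -a))) (Ex (-b + -b))) Y) (Cinv Y)) by (field; auto).
        rewrite H. ring. }
      replace (Ex (-b + -b)) with (Cplus (Ex (-a + -a)) (Cplus (Copp (Ex (-a + -a))) (Ex (-b + -b)))) by ring.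
      rewrite H0. ring. }
    unfold Ex in HE. injection HE. intros Hs Hc.
    assert (Hsin : sin (2 * (b - a)) = 0).
    { replace (2 * (b - a)) with ((-a + -a) - (-b + -b)) by ring.
      rewrite sin_minus, Hs, Hc. ring. }
    apply sin_eq_0_0 in Hsin. destruct Hsin as [k Hk].
    apply Hirr. exists k, (2 * Z.of_nat (S M))%Z. split; [lia|].
    assert (HN : 0 < INR (S M)) by (apply lt_0_INR; lia).
    assert (HPI := PI_RGT_0).
    assert (Hk2 : IZR k = 2 * INR (S M) * al).
    { apply Rmult_eq_reg_r with PI; [| lra]. rewrite <- Hk. unfold a, b. ring. }
    rewrite mult_IZR, <- INR_IZR_INZ, Hk2. field. lra. }
  split; auto. rewrite X1, HY. ring.
Qed.

Lemma line_reduce (ph n1 n2 : R) (M : nat) (A B : C) :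
  n1 ^ 2 + n2 ^ 2 = 1 -> n1 * cos ph + n2 * sin ph = 0 ->
  Cplus (Cmult (Cpow (sin ph / 2, - cos ph / 2) M) (Cmult (n2 / 2, - n1 / 2) A))
        (Cmult (Cpow (sin ph / 2, cos ph / 2) M) (Cmult (n2 / 2, n1 / 2) B)) = RtoC 0 ->
  Cplus (Cmult (Ex (INR (S M) * ph)) (Cmult (Cpow (0, -1/2) M) A))
        (Cmult (Ex (- (INR (S M) * ph))) (Cmult (Cpow (0, 1/2) M) B)) = RtoC 0.
Proof.
  intros Hn Hp H.
  set (s := n2 * cos ph - n1 * sin ph).
  assert (Hsc := sin2_cos2 ph). unfold Rsqr in Hsc.
  assert (E1 : n1 = - s * sin ph).
  { assert (I : n1 + s * sin ph = cos ph * (n1 * cos ph + n2 * sin ph) + n1 * (1 - (sin ph * sin ph + cos ph * cos ph))) by (unfold s; ring).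
    rewrite Hp, Hsc in I. lra. }
  assert (E2 : n2 = s * cos ph).
  { assert (I : n2 - s * cos ph = sin ph * (n1 * cos ph + n2 * sin ph) + n2 * (1 - (sin ph * sin ph + cos ph * cos ph))) by (unfold s; ring).
    rewrite Hp, Hsc in I. lra. }
  assert (Hs : s <> 0).
  { intro Z. rewrite Z in E1, E2. rewrite E1, E2 in Hn. nra. }
  assert (R1 : (sin ph / 2, - cos ph / 2) = Cmult (0, -1/2) (Ex ph))
    by (unfold Ex, Cmult; simpl; f_equal; field).
  assert (R2 : (sin ph / 2, cos ph / 2) = Cmult (0, 1/2) (Ex (- ph)))
    by (unfold Ex, Cmult; simpl; rewrite cos_neg, sin_neg; f_equal; field).
  assert (R3 : (n2 / 2, - n1 / 2) = Cmult (RtoC (s / 2)) (Ex ph))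
    by (unfold Ex, Cmult, RtoC; simpl; rewrite E1, E2; f_equal; field).
  assert (R4 : (n2 / 2, n1 / 2) = Cmult (RtoC (s / 2)) (Ex (- ph)))
    by (unfold Ex, Cmult, RtoC; simpl; rewrite cos_neg, sin_neg, E1, E2; f_equal; field).
  rewrite R1, R2, R3, R4, !Cpow_mult_l in H.
  replace (- (INR (S M) * ph)) with (INR (S M) * (- ph)) by ring.
  rewrite <- !Epow, !Cpow_S.
  apply (Cmult_reg (RtoC (s / 2))).
  - intro Z. injection Z. intros; apply Hs; lra. 
  - rewrite <- H. ring.
Qed.

Lemma dx_W F x y : dx F x y = lin (0, -1/2)%R (Wop F) (0, 1/2)%R (Wbop F) x y.
Proof.
  unfold Wop, Wbop, lin. destruct (dx F x y) as [a1 a2]. destruct (dy F x y) as [b1 b2].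
  unfold Ci, Cplus, Cmult, Copp, RtoC; simpl. f_equal; field.
Qed.

Lemma dy_W F x y : dy F x y = lin (1/2, 0)%R (Wop F) (1/2, 0)%R (Wbop F) x y.
Proof.
  unfold Wop, Wbop, lin. destruct (dx F x y) as [a1 a2]. destruct (dy F x y) as [b1 b2].
  unfold Ci, Cplus, Cmult, Copp, RtoC; simpl. f_equal; field.
Qed.

Lemma smooth_Dw Om w F : smooth_on Om F -> smooth_on Om (Dw w F).
Proof.
  intros HF. induction w as [|b w IH]; [exact HF|].
  destruct b; cbn [Dw]; [apply smooth_dx | apply smooth_dy]; auto.
Qed.

Lemma words_zero Om x0 : open2 Om -> Om (fst x0) (snd x0) ->
  forall w F m, smooth_on Om F ->
  (forall p q, (p + q = m + length w)%nat -> kap F x0 p q = RtoC 0) ->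
  forall p q, (p + q = m)%nat -> kap (Dw w F) x0 p q = RtoC 0.
Proof.
  intros HO Hx0 w. induction w as [|b w IH]; intros F m HF Hz p q Hpq.
  - apply Hz. simpl. lia.
  - assert (IH' : forall p q, (p + q = S m)%nat -> kap (Dw w F) x0 p q = RtoC 0).
    { apply IH; auto. intros p' q' H'. apply Hz. simpl. lia. }
    destruct b; cbn [Dw].
    + rewrite (kap_op Om x0 HO Hx0 dx (0, -1/2)%R (0, 1/2)%R); auto using smooth_Dw.
      * rewrite !IH' by lia. ring.
      * intros; apply dx_W.
    + rewrite (kap_op Om x0 HO Hx0 dy (1/2, 0)%R (1/2, 0)%R); auto using smooth_Dw.
      * rewrite !IH' by lia. ring.
      * intros; apply dy_W.
Qed.

Lemma Ci2 : Cmult Ci Ci = Copp (RtoC 1).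
Proof. unfold Ci, Cmult, Copp, RtoC; simpl. f_equal; ring. Qed.

Lemma kap_helm Om lam u x0 : open2 Om -> Om (fst x0) (snd x0) -> smooth_on Om u ->
  helmholtz_on Om lam u ->
  forall p q, kap u x0 (S p) (S q) = Cmult (RtoC (- lam)) (kap u x0 p q).
Proof.
  intros HO Hx0 Hu Hh p q.
  change (kap u x0 (S p) (S q)) with (kap (Wbop u) x0 (S p) q).
  assert (SWb : smooth_on Om (Wbop u)) by (apply (proj1 (good_Wb Om HO)); auto).
  rewrite <- (kap_W Om x0 HO Hx0); auto.
  rewrite (kap_loc Om x0 HO Hx0 _ (lin (RtoC (- lam)) u (RtoC 0) u)).
  - rewrite (kap_lin Om x0 HO Hx0); auto. ring.
  - intros x y Hxy.
    destruct (good_dx Om HO) as [_ [_ Nx]]. destruct (good_dy Om HO) as [_ [_ Ny]].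
    assert (Sx := smooth_dx Om u Hu). assert (Sy := smooth_dy Om u Hu).
    assert (E1: dy (Wbop u) x y = lin 1 (dy (dy u)) (Copp Ci) (dy (dx u)) x y) by (apply Ny; auto).
    assert (E2: dx (Wbop u) x y = lin 1 (dx (dy u)) (Copp Ci) (dx (dx u)) x y) by (apply Nx; auto).
    transitivity (Cplus (Cmult 1 (dy (Wbop u) x y)) (Cmult Ci (dx (Wbop u) x y))); [reflexivity|].
    rewrite E1, E2. unfold lin.
    rewrite (schwarz_C Om u HO Hu x y Hxy).
    transitivity (Cplus (Cplus (dx (dx u) x y) (dy (dy u) x y))
       (Cmult (Cplus (Cmult Ci Ci) 1) (Copp (dx (dx u) x y)))); [ring|].
    rewrite Ci2, Hh; auto. ring.
Qed.

Lemma iter_formula (Kf : nat -> nat -> nat -> C) (al be a b : C) (m : nat) :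
  (forall j p q, Kf (S j) p q = Cplus (Cmult al (Kf j (S p) q)) (Cmult be (Kf j p (S q)))) ->
  (forall p q, (p + q = m)%nat ->
     Kf O p q = Cplus (if Nat.eqb q 0 then a else RtoC 0) (if Nat.eqb p 0 then b else RtoC 0)) ->
  forall j p q, (p + q + j = m)%nat ->
     Kf j p q = Cplus (if Nat.eqb q 0 then Cmult (Cpow al j) a else RtoC 0)
                      (if Nat.eqb p 0 then Cmult (Cpow be j) b else RtoC 0).
Proof.
  intros Hrec H0 j. induction j as [|j IH]; intros p q Hpq.
  - rewrite H0 by lia. destruct (Nat.eqb q 0), (Nat.eqb p 0); simpl; ring.
  - rewrite Hrec, !IH by lia. simpl.
    destruct (Nat.eqb q 0), (Nat.eqb p 0); ring.
Qed.

Lemma sum_n_zero_C (f : nat -> C) N : (forall k, (k <= N)%nat -> f k = RtoC 0) -> sum_n f N = RtoC 0.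
Proof.
  intros H. rewrite (sum_n_ext_loc f (fun _ => RtoC 0)) by auto. clear H.
  induction N as [|N IHN].
  - rewrite sum_O. reflexivity.
  - rewrite sum_Sn, IHN. change (Cplus (RtoC 0) (RtoC 0) = RtoC 0). ring.
Qed.

Lemma line_equation Om u x0 e h eta M :
  open2 Om -> smooth_on Om u -> Om (fst x0) (snd x0) -> 0 < h ->
  (forall p, on_segment x0 e h p -> Om (fst p) (snd p)) ->
  gen_singular_line u x0 e h eta ->
  (forall p q, (p + q <= M)%nat -> kap u x0 p q = RtoC 0) ->
  (forall p q, (p + q = S M)%nat -> p <> O -> q <> O -> kap u x0 p q = RtoC 0) ->
  exists nu : R * R, fst nu ^ 2 + snd nu ^ 2 = 1 /\ fst nu * fst e + snd nu * snd e = 0 /\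
   Cplus (Cmult (Cpow (snd e / 2, - fst e / 2)%R M) (Cmult (snd nu / 2, - fst nu / 2)%R (kap u x0 (S M) 0)))
         (Cmult (Cpow (snd e / 2, fst e / 2)%R M) (Cmult (snd nu / 2, fst nu / 2)%R (kap u x0 0 (S M)))) = RtoC 0.
Proof.
  intros HO Hu Hx0 Hh Hseg [nu [Hn [Ho Hz]]] IHlow Hmix.
  exists nu; split; auto; split; auto.
  set (G := lin 1 (ddir nu u) eta u).
  assert (Snu : smooth_on Om (ddir nu u)) by (apply (proj1 (good_ddir Om nu HO)); auto).
  assert (SG : smooth_on Om G) by (apply smooth_lin; auto).
  assert (LZ := line_zero Om G x0 e h HO SG Hh).
  assert (LZ' : forall j, pw j (ddir e) G (fst x0) (snd x0) = RtoC 0).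
  { apply LZ.
    - intros t Ht. apply (Hseg (fst x0 + t * fst e, snd x0 + t * snd e)). exists t; split; auto.
    - intros t Ht. unfold G, lin.
      transitivity (Cplus (ddir nu u (fst x0 + t * fst e) (snd x0 + t * snd e))
                          (Cmult eta (u (fst x0 + t * fst e) (snd x0 + t * snd e)))); [ring|].
      apply (Hz (fst x0 + t * fst e, snd x0 + t * snd e)). exists t; split; auto. }
  set (Kf := fun j p q => kap (pw j (ddir e) G) x0 p q).
  assert (Sj : forall j, smooth_on Om (pw j (ddir e) G))
    by (intros j; apply (proj1 (good_pw Om (ddir e) j (good_ddir Om e HO))); auto).
  assert (F := iter_formula Kf (snd e / 2, - fst e / 2)%R (snd e / 2, fst e / 2)%R
     (Cmult (snd nu / 2, - fst nu / 2)%R (kap u x0 (S M) 0))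
     (Cmult (snd nu / 2, fst nu / 2)%R (kap u x0 0 (S M))) M).
  assert (R0 : Kf M O O = RtoC 0) by (apply LZ').
  rewrite F in R0; [exact R0 | | | lia].
  - intros j p q. unfold Kf. rewrite pw_S'.
    apply (kap_op Om x0 HO Hx0 (ddir e)); auto. intros; apply ddir_W.
  - intros p q Hpq. unfold Kf. simpl pw.
    unfold G. rewrite (kap_lin Om x0 HO Hx0); auto.
    rewrite (kap_op Om x0 HO Hx0 (ddir nu) _ _ u p q Hu (fun x y _ => ddir_W nu u x y)).
    rewrite (IHlow p q) by lia.
    destruct p as [|p]; destruct q as [|q]; simpl Nat.eqb.
    + simpl in Hpq. subst M. ring.
    + rewrite (Hmix 1%nat (S q)) by lia. replace M with (S q) by lia. ring.
    + rewrite (Hmix (S p) 1%nat) by lia. replace M with (S p) by lia. ring.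
    + rewrite (Hmix (S (S p)) (S q)), (Hmix (S p) (S (S q))) by lia. ring.
Qed.

Theorem theorem4p1
  (Om : R -> R -> Prop) (lam : R) (u : Cfun)
  (x0 : R * R) (h alpha theta : R) (C1 C2 : C) :
  open2 Om -> 0 < lam ->
  smooth_on Om u -> helmholtz_on Om lam u ->
  Om (fst x0) (snd x0) -> 0 < h ->
  0 < alpha < 2 -> irrational alpha ->
  let em := (cos theta, sin theta) in
  let ep := (cos (theta + alpha * PI), sin (theta + alpha * PI)) in
  (forall p, on_segment x0 em h p -> Om (fst p) (snd p)) ->
  (forall p, on_segment x0 ep h p -> Om (fst p) (snd p)) ->
  C1 <> RtoC 0 -> C2 <> RtoC 0 ->
  gen_singular_line u x0 em h C1 ->
  gen_singular_line u x0 ep h C2 ->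
  (u (fst x0) (snd x0) <> RtoC 0 -> Vani_is u x0 (Some 0%nat)) /\
  (u (fst x0) (snd x0) = RtoC 0 -> Vani_is u x0 None).
Proof.
  intros HO Hlam Hsm Hhel Hx0 Hh Hal Hirr em ep Hseg1 Hseg2 HC1 HC2 Hl1 Hl2.
  split.
  - intros Hu. split.
    + exists 0, 0. intro E. apply Hu. rewrite <- E. unfold taylor_hom. rewrite sum_O. simpl.
      replace (/ (1 * 1) * 1 * 1) with 1 by field. ring.
    + intros m Hm. lia.
  - intros Hu.
    assert (Main : forall N p q, (p + q = N)%nat -> kap u x0 p q = RtoC 0).
    { intros N. induction N as [N IH] using lt_wf_ind. intros p q Hpq.
      destruct N as [|M].
      - assert (p = 0%nat) by lia. assert (q = 0%nat) by lia. subst. exact Hu.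
      - assert (Hmix : forall p q, (p + q = S M)%nat -> p <> O -> q <> O -> kap u x0 p q = RtoC 0).
        { intros p' q' H1 H2 H3. destruct p' as [|p']; [lia|]. destruct q' as [|q']; [lia|].
          rewrite (kap_helm Om lam u x0 HO Hx0 Hsm Hhel). rewrite (IH (p' + q')%nat) by lia. ring. }
        assert (IHlow : forall p q, (p + q <= M)%nat -> kap u x0 p q = RtoC 0)
          by (intros p0 q0 H0; apply (IH (p0 + q0)%nat); lia).
        destruct (line_equation Om u x0 em h C1 M HO Hsm Hx0 Hh Hseg1 Hl1 IHlow Hmix) as [n1 [Hn1 [Ho1 E1]]].
        destruct (line_equation Om u x0 ep h C2 M HO Hsm Hx0 Hh Hseg2 Hl2 IHlow Hmix) as [n2 [Hn2 [Ho2 E2]]].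
        unfold em in Ho1, E1; unfold ep in Ho2, E2; simpl in Ho1, E1, Ho2, E2.
        apply line_reduce in E1; auto. apply line_reduce in E2; auto.
        destruct (two_lines theta alpha M _ _ Hirr E1 E2) as [X0 Y0].
        assert (A0 : kap u x0 (S M) 0 = RtoC 0).
        { apply (Cmult_reg (Cpow (0, -1/2) M)); [apply Cpow_nz; apply C_neq_0_pair; lra | exact X0]. }
        assert (B0 : kap u x0 0 (S M) = RtoC 0).
        { apply (Cmult_reg (Cpow (0, 1/2) M)); [apply Cpow_nz; apply C_neq_0_pair; lra | exact Y0]. }
        destruct p as [|p]; destruct q as [|q].
        + lia.
        + replace (S q) with (S M) by lia. exact B0.
        + replace (S p) with (S M) by lia. exact A0.
        + apply Hmix; lia. }
    intros m [z1 [z2 Hnz]]. apply Hnz. unfold taylor_hom. apply sum_n_zero_C. intros k Hk.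
    assert (W0 : forall w, Dw w u (fst x0) (snd x0) = RtoC 0).
    { intros w. exact (words_zero Om x0 HO Hx0 w u 0 Hsm (fun p q _ => Main (p + q)%nat p q eq_refl) 0 0 eq_refl). }
    rewrite W0. ring.
Qed.
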